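(* As formal power series in $q$, \[\sum_{\pi\in\mathcal{U}}q^{\mathcal{O}(\pi)}=\frac{1}{(q;q)_\infty^2}\quad\text{and}\quad \sum_{\pi\in\mathcal{D}}q^{\mathcal{O}(\pi')}=(-q;q)_\infty^2,\] where $\mathcal{U}$ is the set of all partitions, $\mathcal{D}$ the set of partitions into distinct parts, $\pi'$ denotes the conjugate of $\pi$, and for $\pi=(\lambda_1,\lambda_2,\dots)$, $\mathcal{O}(\pi)=\lambda_1+\lambda_3+\lambda_5+\cdots$.
   Context: A partition is a finite weakly decreasing sequence of positive integers; the conjugate $\pi'$ of $\pi$ is the partition whose $j$-th part is the number of parts of $\pi$ that are $\ge j$. $(a;q)_\infty=\prod_{n\ge0}(1-aq^n)$. *)

(* Defs.v *)
From mathcomp Require Import all_boot all_order all_algebra.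
Set Implicit Arguments. Unset Strict Implicit. Unset Printing Implicit Defensive.
Import Order.TTheory GRing.Theory Num.Theory.
Local Open Scope ring_scope.

Definition is_partition (pi : seq nat) : bool :=
  sorted geq pi && all (fun x => 0 < x)%N pi.

Definition distinct_parts (pi : seq nat) : bool := is_partition pi && uniq pi.

Definition conj_part (pi : seq nat) : seq nat :=
  mkseq (fun j => count (fun x => (j.+1 <= x)%N) pi) (head 0%N pi).

(* O(pi) = lambda_1 + lambda_3 + lambda_5 + ... (0-based even indices). *)
Definition Oodd (pi : seq nat) : nat :=
  (\sum_(i < size pi | ~~ odd i) nth 0%N pi i)%N.

Definition fps := nat -> int.
Definition fps1 : fps := fun n => (n == 0%N)%:Z.
Definition fmul (f g : fps) : fps :=
  fun n => \sum_(i < n.+1) f i * g (n - i)%N.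

Definition binom_factor (s : int) (m : nat) : fps :=
  fun n => (n == 0%N)%:Z + s * (n == m)%:Z.

Definition fprod (f : nat -> fps) (M : nat) : fps :=
  foldr fmul fps1 (map f (iota 0 M)).

(* P is the infinite product prod_{k>=0} f k (coefficientwise stabilization,
   i.e. convergence in the q-adic topology). *)
Definition is_infprod (f : nat -> fps) (P : fps) : Prop :=
  forall n, exists N, forall M, (N <= M)%N -> fprod f M n = P n.

(* (q;q)_oo = prod_{k>=0} (1 - q^{k+1}) *)
Definition qq_factor (k : nat) : fps := binom_factor (-1) k.+1.
(* (-q;q)_oo = prod_{k>=0} (1 + q^{k+1}) *)
Definition mqq_factor (k : nat) : fps := binom_factor 1 k.+1.

(* Main.v *)
Require Import Defs.
From mathcomp Require Import all_boot all_order all_algebra.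
From mathcomp Require Import zify ring lra.
From Stdlib Require Import FunctionalExtensionality.
Import Order.TTheory GRing.Theory Num.Theory.
Set Implicit Arguments. Unset Strict Implicit. Unset Printing Implicit Defensive.

Section RingPart.
Local Open Scope ring_scope.

Definition tr (N : nat) (f : fps) : {poly int} := \poly_(i < N) f i.

Lemma coef_tr N f n : (n < N)%N -> (tr N f)`_n = f n.
Proof. by move=> h; rewrite /tr coef_poly h. Qed.

Lemma fmulE N f g n : (n < N)%N -> fmul f g n = (tr N f * tr N g)`_n.
Proof.
move=> h; rewrite coefM /fmul; apply: eq_bigr => i _.
rewrite !coef_tr //; apply: leq_ltn_trans h; [exact: leq_subr | ].
by rewrite -ltnS.
Qed.

Lemma fmulC f g : fmul f g = fmul g f.
Proof. apply: functional_extensionality => n; by rewrite !(@fmulE n.+1) // mulrC. Qed.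

Lemma fmulA f g h : fmul f (fmul g h) = fmul (fmul f g) h.
Proof.
apply: functional_extensionality => n.
have -> : fmul f (fmul g h) n = (tr n.+1 f * (tr n.+1 g * tr n.+1 h))`_n.
  rewrite coefM {1}/fmul; apply: eq_bigr => i _.
  rewrite coef_tr // (@fmulE n.+1) //; rewrite ltnS; exact: leq_subr.
have -> : fmul (fmul f g) h n = ((tr n.+1 f * tr n.+1 g) * tr n.+1 h)`_n.
  rewrite coefM {1}/fmul; apply: eq_bigr => i _.
  rewrite (@coef_tr n.+1 h); last by rewrite ltnS leq_subr.
  by rewrite (@fmulE n.+1) // ltnS; case: i => /= i; rewrite ltnS => hi; apply: leq_trans hi _.
by rewrite mulrA.
Qed.

Lemma tr1 N : (0 < N)%N -> tr N fps1 = 1.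
Proof.
move=> h; apply/polyP => i; rewrite coef_poly coef1 /fps1.
by case: ifP => // hi; case: (i =P 0%N) => // ei; move: hi; rewrite ei h.
Qed.

Lemma fmulr1 f : fmul f fps1 = f.
Proof.
apply: functional_extensionality => n.
by rewrite (@fmulE n.+1) // tr1 // mulr1 coef_tr.
Qed.

Lemma fmul1r f : fmul fps1 f = f.
Proof. by rewrite fmulC fmulr1. Qed.

Lemma tr_binom N s m : (0 < N)%N ->
  tr N (binom_factor s m) = 1 + (if (m < N)%N then s else 0)%:P * 'X^m.
Proof.
move=> h; apply/polyP => i; rewrite coef_poly coefD coef1 coefCM coefXn /binom_factor !natz.
case: ifP => hi; case: ifP => hm //.
- rewrite mul0r; have -> : (i == m) = false by apply/eqP => ei; move: hm; rewrite -ei hi.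
  by rewrite mulr0.
- have -> : (i == m) = false by apply/eqP => ei; move: hi; rewrite ei hm.
  have -> : (i == 0%N) = false by apply/eqP => ei; move: hi; rewrite ei h.
  by rewrite mulr0 addr0.
- have -> : (i == 0%N) = false by apply/eqP => ei; move: hi; rewrite ei h.
  by rewrite mul0r addr0.
Qed.

Lemma fmul_binom f s m n : fmul f (binom_factor s m) n =
  f n + (if (m <= n)%N then s * f (n - m)%N else 0).
Proof.
rewrite (@fmulE n.+1) // tr_binom // mulrDr mulr1 coefD coef_tr //.
rewrite mulrCA coefCM coefMXn ltnS.
case: (leqP m n) => hm; last by rewrite mulr0.
by rewrite coef_tr // ltnS leq_subr.
Qed.

Lemma foldr_fmul z l : foldr fmul z l = fmul (foldr fmul fps1 l) z.
Proof.
elim: l => [|a l IH] /=; first by rewrite fmul1r.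
by rewrite IH fmulA.
Qed.

Lemma fprodS (f : nat -> fps) M : Defs.fprod f M.+1 = fmul (Defs.fprod f M) (f M).
Proof.
rewrite /Defs.fprod -addn1 iotaD map_cat foldr_cat add0n.
rewrite (_ : [seq f i | i <- iota M 1] = [:: f M]) //.
rewrite (_ : foldr fmul fps1 [:: f M] = fmul (f M) fps1) // fmulr1.
by rewrite foldr_fmul.
Qed.

Lemma fmul_eqn n f f' g g' :
  (forall k, (k <= n)%N -> f k = f' k) -> (forall k, (k <= n)%N -> g k = g' k) ->
  fmul f g n = fmul f' g' n.
Proof.
move=> hf hg; rewrite /fmul; apply: eq_bigr => [[i hi]] _.
have h1 : (i <= n)%N by rewrite -ltnS.
have h2 : (n - i <= n)%N by apply: leq_subr.
rewrite (hf i h1) (hg _ h2). reflexivity.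
Qed.

Lemma fprod_stab s M k : (k <= M)%N ->
  Defs.fprod (fun j => binom_factor s j.+1) M k = Defs.fprod (fun j => binom_factor s j.+1) k k.
Proof.
elim: M => [|M IH] hk; first by move: hk; rewrite leqn0 => /eqP ->.
case: (ltngtP k M.+1) => h; last by rewrite h.
  have hk' : (M.+1 <= k)%N = false by rewrite ltnNge -ltnS h.
  by rewrite fprodS fmul_binom hk' addr0 IH // -ltnS.
by move: hk; rewrite leqNgt h.
Qed.

Lemma infprod_ex s : exists P, is_infprod (fun j => binom_factor s j.+1) P.
Proof.
exists (fun k => Defs.fprod (fun j => binom_factor s j.+1) k k) => n.
by exists n => M hM; rewrite fprod_stab.
Qed.

Lemma infprod_val s P : is_infprod (fun j => binom_factor s j.+1) P ->
  forall k, P k = Defs.fprod (fun j => binom_factor s j.+1) k k.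
Proof.
move=> hP k; have [N hN] := hP k.
rewrite -(hN (maxn N k)) ?leq_maxl //.
rewrite fprod_stab //; exact: leq_maxr.
Qed.

End RingPart.

Lemma gtn_trans : transitive gtn.
Proof. by move=> y x z h1 h2; apply: ltn_trans h2 h1. Qed.
Lemma geq_trans : transitive geq.
Proof. by move=> y x z h1 h2; apply: leq_trans h2 h1. Qed.

Definition sumuh (s : seq nat) : nat := \sum_(x <- s) uphalf x.

Lemma sumuh_cons x r : sumuh (x :: r) = uphalf x + sumuh r.
Proof. by rewrite /sumuh big_cons. Qed.

Fixpoint E2 (M n : nat) : seq (seq nat) := match M with
| 0 => if n == 0 then [:: [::]] else [::]
| M'.+1 => E2 M' n ++ (if M'.+1 <= n then
     [seq M'.*2.+1 :: t | t <- E2 M' (n - M'.+1)] ++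
     [seq M'.*2.+2 :: t | t <- E2 M' (n - M'.+1)] ++
     (if M'.+1 <= n - M'.+1 then
        [seq [:: M'.*2.+2, M'.*2.+1 & t] | t <- E2 M' (n - M'.+1 - M'.+1)]
      else [::])
   else [::])
end.

Definition spec2 M n s :=
  [&& pairwise gtn s, all (fun x => 0 < x <= M.*2) s & sumuh s == n].

Lemma mem_cons_map (a : nat) (L : seq (seq nat)) x r :
  (x :: r \in [seq a :: t | t <- L]) = (x == a) && (r \in L).
Proof.
apply/mapP/andP => [[t ht [-> ->]]|[/eqP -> hr]]; first by [].
by exists r.
Qed.

Lemma mem_cons2_map (a b : nat) (L : seq (seq nat)) x y r :
  ([:: x, y & r] \in [seq [:: a, b & t] | t <- L]) = [&& x == a, y == b & r \in L].
Proof.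
apply/mapP/and3P => [[t ht [-> -> ->]]|[/eqP -> /eqP -> hr]]; first by [].
by exists r.
Qed.

Lemma nil_notin_map (a : nat) (L : seq (seq nat)) : ([::] \in [seq a :: t | t <- L]) = false.
Proof. by apply/mapP => -[]. Qed.
Lemma nil_notin_map2 (a b : nat) (L : seq (seq nat)) : ([::] \in [seq [:: a, b & t] | t <- L]) = false.
Proof. by apply/mapP => -[]. Qed.
Lemma single_notin_map2 (a b x : nat) (L : seq (seq nat)) : ([:: x] \in [seq [:: a, b & t] | t <- L]) = false.
Proof. by apply/mapP => -[]. Qed.

Lemma all_bound_mono M M' s : M <= M' -> all (fun x => 0 < x <= M.*2) s ->
  all (fun x => 0 < x <= M'.*2) s.
Proof.
move=> h /allP H; apply/allP => x /H /andP [h1 h2]; rewrite h1 /=.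
apply: leq_trans h2 _; by rewrite leq_double.
Qed.

Lemma all_lt_bound x r M : all (fun y => y < x) r ->
  all (fun x => 0 < x <= M.*2.+2) r -> x <= M.*2.+1 -> all (fun x => 0 < x <= M.*2) r.
Proof.
move=> /allP h1 /allP h2 hx; apply/allP => y hy.
have /andP [a b] := h2 y hy; have c := h1 y hy; rewrite a /=; lia.
Qed.

Lemma all_bound_lt M r x : all (fun y => 0 < y <= M.*2) r -> M.*2 < x ->
  all (fun y => y < x) r.
Proof.
move=> /allP h hx; apply/allP => y /h /andP [_ hy]; exact: leq_ltn_trans hy hx.
Qed.

Lemma spec2_cons M n x r : spec2 M n (x :: r) =
  [&& all (fun y => y < x) r, pairwise gtn r, 0 < x <= M.*2,
      all (fun x => 0 < x <= M.*2) r & uphalf x + sumuh r == n].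
Proof.
rewrite /spec2 /= sumuh_cons.
by case: (all _ r); case: (pairwise _ r); case: (0 < x <= M.*2); case: (all _ r).
Qed.

Lemma E2P M : forall n s, (s \in E2 M n) = spec2 M n s.
Proof.
elim: M => [|M IH] n s.
  case: s => [|x r] /=.
    rewrite /spec2 /sumuh big_nil /=.
    by case: (n =P 0) => [->|/eqP hn] //; rewrite eq_sym (negbTE hn).
  rewrite spec2_cons; have -> : (0 < x <= 0.*2) = false by case: x.
  rewrite !andbF ?andFb; by case: (n == 0).
rewrite [E2 _ _]/= mem_cat.
case: s => [|x r].
  rewrite IH; have -> : ([::] \in (if M.+1 <= n then
     [seq M.*2.+1 :: t | t <- E2 M (n - M.+1)] ++
     [seq M.*2.+2 :: t | t <- E2 M (n - M.+1)] ++
     (if M.+1 <= n - M.+1 then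
        [seq [:: M.*2.+2, M.*2.+1 & t] | t <- E2 M (n - M.+1 - M.+1)]
      else [::])
   else [::])) = false.
    case: ifP => _ //; rewrite !mem_cat !nil_notin_map /=.
    by case: ifP => _ //; rewrite nil_notin_map2.
  by rewrite orbF /spec2.
apply/idP/idP.
  case/orP.
    rewrite IH !spec2_cons => /and5P [h1 h2 /andP [h3 h4] h5 h6].
    rewrite h1 h2 h6 h3 /= (all_bound_mono (leqnSn M) h5) andbT; lia.
  case: ifP => hmn //; rewrite !mem_cat => /orP [|/orP []].
  - rewrite mem_cons_map IH => /andP [/eqP -> /and3P [h1 h2 /eqP h3]].
    rewrite spec2_cons (all_bound_lt h2) // h1 (all_bound_mono (leqnSn M) h2) /=.
    apply/andP; split; first lia.
    apply/eqP; rewrite h3; lia.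
  - rewrite mem_cons_map IH => /andP [/eqP -> /and3P [h1 h2 /eqP h3]].
    rewrite spec2_cons (all_bound_lt h2) ?h1 ?(all_bound_mono (leqnSn M) h2) /=; last lia.
    apply/andP; split; first lia.
    apply/eqP; rewrite h3; lia.
  - case: ifP => hd //; case: r => [|y r]; first by rewrite single_notin_map2.
    rewrite mem_cons2_map IH => /and3P [/eqP -> /eqP -> /and3P [h1 h2 /eqP h3]].
    rewrite spec2_cons; apply/and5P; split.
    + apply/allP => z; rewrite inE => /orP [/eqP -> | hz]; first lia.
      by have /andP [_ b] := allP h2 z hz; lia.
    + rewrite /= h1 andbT; apply/allP => z hz; have /andP [_ b] := allP h2 z hz; rewrite /=; lia.
    + lia.
    + rewrite /= (all_bound_mono (leqnSn M) h2) andbT; lia.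
    + rewrite !sumuh_cons h3; apply/eqP; lia.
rewrite spec2_cons => /and5P [hlt hpw /andP [hx0 hx] hb /eqP hsum].
case: (leqP x M.*2) => hxM.
  apply/orP; left; rewrite IH spec2_cons hlt hpw hx0 hxM (all_lt_bound hlt hb (leqW hxM)).
  by rewrite hsum eqxx.
apply/orP; right.
have hmn : M.+1 <= n by lia.
rewrite hmn !mem_cat.
have hbr : all (fun x => 0 < x <= M.*2.+2) r := hb.
case: (x =P M.*2.+1) => [ex|nx].
  apply/orP; left; rewrite ex mem_cons_map eqxx IH /spec2 hpw /=.
  rewrite (all_lt_bound hlt hbr) ?ex //=; apply/eqP; lia.
have ex : x = M.*2.+2 by lia.
apply/orP; right; apply/orP.
case: r hlt hpw hb hbr hsum => [|y r] hlt hpw hb hbr hsum.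
  left; rewrite ex mem_cons_map eqxx IH /spec2 /= /sumuh big_nil.
  apply/eqP; move: hsum; rewrite /sumuh big_nil; lia.
move: hpw => /= /andP [hyr hpw].
move: hlt => /= /andP [hyx hlt].
move: hbr => /= /andP [/andP [hy0 hy] hbr].
case: (y =P M.*2.+1) => [ey|ny].
  right; have hd : M.+1 <= n - M.+1 by move: hsum; rewrite sumuh_cons; lia.
  rewrite hd ex ey mem_cons2_map !eqxx IH /spec2 hpw /=.
  have hr : all (fun x => 0 < x <= M.*2) r.
    apply/allP => z hz; have /andP [a b] := allP hbr z hz.
    have c : z < y := allP hyr z hz; apply/andP; split => //; lia.
  rewrite hr /=; apply/eqP; move: hsum; rewrite sumuh_cons; lia.
left; rewrite ex mem_cons_map eqxx IH spec2_cons hyr hpw /=.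
have hr : all (fun x => 0 < x <= M.*2) r.
  apply/allP => z hz; have /andP [a b] := allP hbr z hz.
  have c : z < y := allP hyr z hz; apply/andP; split => //; lia.
rewrite hr hy0 /=; apply/andP; split; first lia.
apply/eqP; move: hsum; rewrite sumuh_cons; lia.
Qed.

Lemma cons_inj (a : nat) : injective (cons a).
Proof. by move=> ? ? []. Qed.
Lemma cons2_inj (a b : nat) : injective (fun t : seq nat => [:: a, b & t]).
Proof. by move=> ? ? []. Qed.

Lemma notin_E2_big M n a t : M.*2 < a -> (a :: t \in E2 M n) = false.
Proof.
move=> h; rewrite E2P spec2_cons; apply/negP => /and5P [_ _ /andP [_ h'] _ _]; lia.
Qed.

Lemma E2_uniq M n : uniq (E2 M n).
Proof.
elim: M n => [|M IH] n; first by rewrite /=; case: (n == 0).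
rewrite [E2 _ _]/= cat_uniq IH /=; apply/andP; split.
  apply/hasPn => s; case: ifP => // _; rewrite !mem_cat.
  move=> /orP [/mapP [t _ ->]|/orP [/mapP [t _ ->]|]]; try by rewrite notin_E2_big.
  by case: ifP => // _ /mapP [t _ ->]; rewrite notin_E2_big.
case: ifP => // _; rewrite !cat_uniq !(map_inj_uniq (@cons_inj _)) !IH /=.
apply/and3P; split.
  apply/hasPn => s; rewrite mem_cat => /orP [/mapP [t _ ->]|].
    by apply/negP => /mapP [t' _ []]; lia.
  by case: ifP => // _ /mapP [t _ ->]; apply/negP => /mapP [t' _ []]; lia.
  by case: ifP => // _; apply/hasPn => s /mapP [t _ ->]; apply/negP => /mapP [t' ht' [e]]; move: ht'; rewrite -e notin_E2_big.
by case: ifP => // _; rewrite (map_inj_uniq (@cons2_inj _ _)) IH.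
Qed.

Lemma E2_stab M k : k <= M -> E2 M k = E2 k k.
Proof.
elim: M => [|M IH] hk; first by move: hk; rewrite leqn0 => /eqP ->.
case: (ltngtP k M.+1) => h; last by rewrite h.
  by rewrite [E2 M.+1 k]/= ifN -?ltnNge // cats0 IH // -ltnS.
by move: hk; rewrite leqNgt h.
Qed.

Definition D2 M : fps := fun k => Posz (size (E2 M k)).

Lemma D2S M : D2 M.+1 = fmul (fmul (D2 M) (mqq_factor M)) (mqq_factor M).
Proof.
apply: functional_extensionality => n.
rewrite /mqq_factor !fmul_binom /D2 [E2 M.+1 n]/= size_cat.
case: (leqP M.+1 n) => h.
  rewrite !size_cat !size_map; case: (leqP M.+1 (n - M.+1)) => h2.
    rewrite size_map; lia.
  rewrite /=; lia.
rewrite /=; lia.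
Qed.

Lemma D20 : D2 0 = fps1.
Proof. by apply: functional_extensionality => n; rewrite /D2 /fps1 /=; case: (n == 0). Qed.

Lemma Pm_sq M : fmul (Defs.fprod mqq_factor M) (Defs.fprod mqq_factor M) = D2 M.
Proof.
elim: M => [|M IH].
  rewrite D20 (_ : Defs.fprod mqq_factor 0 = fps1) //; exact: fmulr1.
rewrite fprodS D2S -IH.
set X := Defs.fprod mqq_factor M; set b := mqq_factor M.
rewrite -!fmulA; congr (fmul X _).
by rewrite fmulA (fmulC b X) -fmulA.
Qed.

Lemma cnt_half x L : \sum_(i < L | ~~ odd i) (i < x) = uphalf (minn x L).
Proof.
rewrite big_mkcond; elim: L => [|L IH]; first by rewrite big_ord0 minn0.
rewrite big_ord_recr /= IH.
have e1 := odd_double_half L; have e2 := odd_double_half L.+1.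
rewrite /= in e2; rewrite !uphalf_half /=.
case: (leqP x L) => h.
  have -> : minn x L.+1 = x by lia.
  by case: (odd L); rewrite /= addn0.
have -> : minn x L.+1 = L.+1 by lia.
move: e1 e2; rewrite /=; case: (odd L) => /= e1 e2; lia.
Qed.

Lemma conj_sum L pi : \sum_(i < L | ~~ odd i) count (fun x => i.+1 <= x) pi =
  \sum_(x <- pi) uphalf (minn x L).
Proof.
elim: pi => [|x r IH]; first by rewrite big_nil big1 // => i _.
by rewrite big_cons /= big_split /= IH cnt_half.
Qed.

Lemma head_max pi x : sorted geq pi -> x \in pi -> x <= head 0 pi.
Proof.
case: pi => [|a r] //= hs; rewrite inE => /orP [/eqP -> //|hx].
have := order_path_min geq_trans hs => /allP /(_ x hx) //.
Qed.

Lemma Oodd_conj pi : sorted geq pi -> Oodd (conj_part pi) = sumuh pi.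
Proof.
move=> hs; rewrite /Oodd /conj_part size_mkseq.
under eq_bigr => i _ do rewrite nth_mkseq //.
rewrite conj_sum /sumuh; apply: eq_big_seq => x hx.
by rewrite (minn_idPl (head_max hs hx)).
Qed.

Lemma all_gtn_geq x s : all (gtn x) s = all (geq x) s && (x \notin s).
Proof.
elim: s => [|y s IH] //=; rewrite IH inE negb_or.
by case: (ltngtP y x) => h /=; rewrite ?andbF.
Qed.

Lemma distinctE pi : distinct_parts pi = pairwise gtn pi && all (fun x => 0 < x) pi.
Proof.
rewrite /distinct_parts /is_partition (sorted_pairwise geq_trans).
have aux : forall s : seq nat, pairwise geq s && uniq s = pairwise gtn s.
  elim=> [|x r IH] //=; rewrite all_gtn_geq -IH.
  by case: (all _ r); case: (x \in r); case: (pairwise _ r); case: (uniq r).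
rewrite -aux.
by case: (pairwise geq pi); case: (uniq pi); case: (all _ pi).
Qed.

Lemma uphalf_le_sumuh x s : x \in s -> uphalf x <= sumuh s.
Proof.
elim: s => [|y s IH] //; rewrite inE sumuh_cons => /orP [/eqP ->|h].
  exact: leq_addr.
by apply: leq_trans (IH h) _; exact: leq_addl.
Qed.

Lemma pw_gtn_sorted_geq s : pairwise gtn s -> sorted geq s.
Proof.
rewrite -(sorted_pairwise gtn_trans); apply: sub_sorted => a b /=; exact: ltnW.
Qed.

Lemma part2 : (exists P, is_infprod mqq_factor P) /\
   forall P, is_infprod mqq_factor P ->
     forall n, exists s : seq (seq nat),
       [/\ uniq s,
           forall pi, (pi \in s) = distinct_parts pi && (Oodd (conj_part pi) == n)
         & Posz (size s) = fmul P P n].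
Proof.
split; first exact: (@infprod_ex 1%R).
move=> P hP n; exists (E2 n n); split.
- exact: E2_uniq.
- move=> pi; rewrite E2P /spec2 distinctE; apply/idP/idP.
    case/and3P => h1 h2 /eqP h3.
    rewrite h1 /= Oodd_conj ?h3 ?eqxx ?andbT; last exact: pw_gtn_sorted_geq.
    by apply/allP => x /(allP h2) /andP [].
  case/andP => /andP [h1 h2]; rewrite Oodd_conj; last exact: pw_gtn_sorted_geq.
  move=> /eqP h3; rewrite h1 h3 eqxx andbT /=.
  apply/allP => x hx; rewrite (allP h2 x hx) /=.
  have := uphalf_le_sumuh hx; rewrite h3 => h; lia.
- have hv := infprod_val (s := 1%R) hP.
  have -> : Posz (size (E2 n n)) = D2 n n by [].
  rewrite -Pm_sq; apply: fmul_eqn => k hk; rewrite (hv k);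
    exact: (fprod_stab 1%R hk).
Qed.

Fixpoint os (b : bool) (s : seq nat) : nat :=
  if s is x :: r then (if b then x else 0) + os (~~ b) r else 0.

Lemma os_big c s : \sum_(i < size s | odd i == c) nth 0 s i = os (~~ c) s.
Proof.
elim: s c => [|x s IH] c; first by rewrite big_ord0.
rewrite big_mkcond big_ord_recl /=.
rewrite (eq_bigr (fun i : 'I_(size s) => if odd i == ~~ c then nth 0 s i else 0)); last first.
  by move=> i _; rewrite /=; case: (odd i); case: c.
by rewrite -big_mkcond IH negbK; case: c.
Qed.

Lemma Oodd_os s : Oodd s = os true s.
Proof.
rewrite /Oodd -(os_big false); apply: eq_bigl => i; by case: (odd i).
Qed.

Lemma os_cat b s t : os b (s ++ t) = os b s + os (if odd (size s) then ~~ b else b) t.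
Proof.
elim: s b => [|x s IH] b //=; rewrite IH addnA; congr (_ + os _ t).
by case: (odd (size s)); case: b.
Qed.

Lemma os_nseq0 b m : os b (nseq m 0) = 0.
Proof. by elim: m b => [|m IH] b //=; rewrite IH; case: b. Qed.

Lemma os_zeros b s m : os b (s ++ nseq m 0) = os b s.
Proof. by rewrite os_cat os_nseq0 addn0. Qed.

Lemma os_nseq1 b M : os b (nseq M.*2 1) = M.
Proof.
elim: M b => [|M IH] b //; rewrite doubleS /= IH; case: b => /=; lia.
Qed.

Lemma os_map_add b k t : os b (map (addn k) t) = os b t + k * os b (nseq (size t) 1).
Proof.
elim: t b => [|x t IH] b /=; first by rewrite muln0.
rewrite !IH; case: b => /=; lia.
Qed.

Lemma size_os b s : all (fun x => 0 < x) s -> size s <= (os b s).*2 + ~~ b.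
Proof.
elim: s b => [|x s IH] b //= /andP [hx hs]; have := IH (~~ b) hs.
case: b => /=; lia.
Qed.

Definition bld (k j : nat) (t : seq nat) : seq nat := map (addn k) t ++ [:: k; j].

Fixpoint E1 (M n : nat) : seq (seq nat) := match M with
| 0 => if n == 0 then [:: [::]] else [::]
| M'.+1 => flatten [seq (if M'.+1 %| n - i then
      [seq bld ((n - i) %/ M'.+1) j t | j <- iota 0 ((n - i) %/ M'.+1).+1, t <- E1 M' i]
      else [::]) | i <- iota 0 n.+1]
end.

Lemma E1S M n : E1 M.+1 n = flatten [seq (if M.+1 %| n - i then
      [seq bld ((n - i) %/ M.+1) j t | j <- iota 0 ((n - i) %/ M.+1).+1, t <- E1 M i]
      else [::]) | i <- iota 0 n.+1].
Proof. by []. Qed.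

Definition spec1 M n s := [&& size s == M.*2, pairwise geq s & os true s == n].

Lemma size_bld k j t : size (bld k j t) = (size t).+2.
Proof. by rewrite /bld size_cat size_map addn2. Qed.

Lemma pairwise_bld k j t : pairwise geq t -> j <= k -> pairwise geq (bld k j t).
Proof.
move=> ht hj; rewrite /bld pairwise_cat pairwise_map /= hj andbT.
apply/andP; split.
  apply/allrelP => x y /mapP [z _ ->]; rewrite !inE => /orP [/eqP ->|/eqP ->] /=.
    exact: leq_addr.
  by apply: leq_trans (leq_addr _ _).
rewrite !andbT; by apply: sub_pairwise ht => a b /=; rewrite leq_add2l.
Qed.

Lemma os_bld M k j t : size t = M.*2 -> os true (bld k j t) = os true t + k * M.+1.
Proof.
move=> hs; rewrite /bld os_cat size_map hs odd_double os_map_add hs os_nseq1 /=; lia.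
Qed.

Lemma nth_bld M k j t : size t = M.*2 -> nth 0 (bld k j t) M.*2 = k.
Proof. by move=> hs; rewrite /bld nth_cat size_map hs ltnn subnn. Qed.

Lemma pairwise_map_in (f : nat -> nat) (r r' : rel nat) s :
  pairwise r s -> {in s &, forall x y, r x y -> r' (f x) (f y)} -> pairwise r' (map f s).
Proof.
elim: s => [|x s IH] //= /andP [h1 h2] hf; apply/andP; split.
  apply/allP => _ /mapP [y hy ->]; apply: hf; rewrite ?inE ?eqxx ?hy ?orbT //.
  exact: (allP h1).
apply: IH => // a b ha hb; apply: hf; by rewrite inE ?ha ?hb orbT.
Qed.

Lemma E1P M : forall n s, (s \in E1 M n) = spec1 M n s.
Proof.
elim: M => [|M IH] n s.
  rewrite /spec1 /=; case: s => [|x r] /=.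
    by case: (n =P 0) => [->|/eqP hn] //; rewrite eq_sym (negbTE hn).
  by case: (n == 0).
rewrite E1S; apply/idP/idP.
  move=> /flattenP [L /mapP [i hi ->]]; case: ifP => // hdiv.
  move=> /allpairsP [[j t] [hj ht ->]]; rewrite mem_iota /= in hj.
  move: ht => /=; rewrite IH => /and3P [/eqP h1 h2 /eqP h3].
  rewrite mem_iota in hi.
  rewrite add0n ltnS in hj.
  rewrite /spec1 size_bld h1 doubleS eqxx /= pairwise_bld //.
  rewrite (os_bld _ _ h1) h3 divnK //; apply/eqP; lia.
case/and3P => /eqP hsz hpw /eqP hos.
set k := nth 0 s M.*2; set j := nth 0 s M.*2.+1; set t0 := take M.*2 s.
have hs : s = t0 ++ [:: k; j].
  rewrite -{1}(cat_take_drop M.*2 s) (drop_nth 0) ?hsz ?doubleS //.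
  rewrite (drop_nth 0) ?hsz ?doubleS // drop_oversize ?hsz ?doubleS //.
have ht0 : size t0 = M.*2 by rewrite size_takel // hsz doubleS; lia.
have := hpw; rewrite {1}hs pairwise_cat => /and3P [/allrelP har hpw0 hkj].
have hjk : j <= k by case/andP: hkj => /andP [].
have hge : forall x, x \in t0 -> k <= x.
  by move=> x hx; apply: (har x k hx); rewrite inE eqxx.
set t := map (subn^~ k) t0.
have htt : map (addn k) t = t0.
  rewrite /t -map_comp; rewrite -[RHS]map_id; apply/eq_in_map => x hx /=.
  by rewrite subnKC // hge.
have hst : size t = M.*2 by rewrite size_map.
have hs' : s = bld k j t by rewrite /bld htt.
set i := os true t.
have hn : n = i + k * M.+1 by rewrite -hos hs' (os_bld _ _ hst).
rewrite hs'; apply/flattenP; exists (if M.+1 %| n - i then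
      [seq bld ((n - i) %/ M.+1) j t | j <- iota 0 ((n - i) %/ M.+1).+1, t <- E1 M i]
      else [::]).
  apply/mapP; exists i => //; rewrite mem_iota; lia.
have -> : n - i = k * M.+1 by lia.
rewrite dvdn_mull // mulnK //.
apply/allpairsP; exists (j, t); split => //.
  by rewrite mem_iota /= ltnS.
rewrite /= IH /spec1 hst eqxx eqxx andbT /=.
apply: pairwise_map_in hpw0 _ => a b ha hb /=.
have := hge a ha; have := hge b hb; lia.
Qed.

Lemma uniq_flatten_key (I T : eqType) (key : T -> I) (ix : seq I) (F : I -> seq T) :
  uniq ix -> (forall i, uniq (F i)) -> (forall i x, i \in ix -> x \in F i -> key x = i) ->
  uniq (flatten (map F ix)).
Proof.
elim: ix => [|i ix IH] //= /andP [hi hu] hF hk.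
rewrite cat_uniq hF IH // ?andbT /=; last by move=> i' x hi'; apply: hk; rewrite inE hi' orbT.
apply/hasPn => x /flattenP [L /mapP [i' hi' ->] hx].
apply/negP => hxi.
have e1 : key x = i := hk _ _ (mem_head _ _) hxi.
have e2 : key x = i' by apply: hk hx; rewrite inE hi' orbT.
by move: hi; rewrite -e1 e2 hi'.
Qed.

Lemma E1_uniq M n : uniq (E1 M n).
Proof.
elim: M n => [|M IH] n; first by rewrite /=; case: (n == 0).
rewrite E1S; apply: (uniq_flatten_key (key := fun s => n - M.+1 * nth 0 s M.*2)).
- exact: iota_uniq.
- move=> i; case: ifP => // _; apply: allpairs_uniq; rewrite ?iota_uniq ?IH //.
  move=> [j t] [j' t'] /allpairsP [[a b] [_ hb [-> ->]]] /allpairsP [[a' b'] [_ hb' [-> ->]]] /=.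
  move: hb hb'; rewrite !E1P => /and3P [/eqP h1 _ _] /and3P [/eqP h1' _ _].
  rewrite /bld => /eqP; rewrite eqseq_cat ?size_map ?h1 ?h1' // => /andP [/eqP e /eqP [->]].
  by rewrite (inj_map (@addnI _) e).
- move=> i x hi; rewrite mem_iota in hi; case: ifP => // hd /allpairsP [[j t] [_ ht ->]] /=.
  move: ht; rewrite E1P => /and3P [/eqP h1 _ /eqP h3].
  rewrite (nth_bld _ _ h1) mulnC divnK //; lia.
Qed.

Definition geo2 (m : nat) : fps := fun r => Posz (if m %| r then (r %/ m).+1 else 0).
Definition geo1 (m : nat) : fps := fun r => Posz (m %| r).
Definition D1 M : fps := fun k => Posz (size (E1 M k)).

Lemma size_E1S M n : size (E1 M.+1 n) =
  \sum_(i < n.+1) size (E1 M i) * (if M.+1 %| n - i then ((n - i) %/ M.+1).+1 else 0).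
Proof.
rewrite E1S size_flatten /shape -map_comp sumnE big_map.
rewrite (_ : iota 0 n.+1 = index_iota 0 n.+1); last by rewrite /index_iota subn0.
rewrite big_mkord; apply: eq_bigr => i _.
rewrite /comp; case: ifP => _; last by rewrite muln0.
by rewrite size_allpairs size_iota mulnC.
Qed.

Lemma D1S M : D1 M.+1 = fmul (D1 M) (geo2 M.+1).
Proof.
apply: functional_extensionality => n.
rewrite /D1 size_E1S /fmul -[Posz _]natz natr_sum; apply: eq_bigr => i _.
by rewrite natrM !natz.
Qed.

Lemma D10 : D1 0 = fps1.
Proof. by apply: functional_extensionality => n; rewrite /D1 /fps1 /=; case: (n == 0). Qed.

Lemma geo2_q m : 0 < m -> fmul (geo2 m) (binom_factor (-1) m) = geo1 m.
Proof.
move=> hm; apply: functional_extensionality => n.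
rewrite fmul_binom /geo2 /geo1.
case: (leqP m n) => h.
  have -> : n = m + (n - m) by rewrite subnKC.
  rewrite addKn (dvdn_addr _ (dvdnn m)) divnDl ?dvdnn // divnn hm.
  case: (m %| n - m); lia.
rewrite (divn_small h); case: (m %| n); lia.
Qed.

Lemma geo1_q m : 0 < m -> fmul (geo1 m) (binom_factor (-1) m) = fps1.
Proof.
move=> hm; apply: functional_extensionality => n.
rewrite fmul_binom /geo1 /fps1.
case: (leqP m n) => h.
  have -> : n = m + (n - m) by rewrite subnKC.
  rewrite addKn (dvdn_addr _ (dvdnn m)).
  have -> : (m + (n - m) == 0) = false by apply/eqP; lia.
  case: (m %| n - m); lia.
case: n h => [|n] h; first by rewrite dvdn0 addr0.
have -> : (m %| n.+1) = false by apply/negP => /(dvdn_leq (ltn0Sn n)); lia.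
by rewrite addr0.
Qed.

Lemma D1_stab M k : k <= M -> D1 M k = D1 k k.
Proof.
elim: M => [|M IH] hk.
  move: hk; rewrite leqn0 => /eqP ->; reflexivity.
case: (ltngtP k M.+1) => h.
- have hkM : k <= M by rewrite -ltnS.
  rewrite D1S -(IH hkM).
  transitivity (fmul (D1 M) fps1 k); last by rewrite fmulr1.
  apply: fmul_eqn => [r _|r hr]; first reflexivity.
  rewrite /geo2 /fps1; case: r hr => [|r] hr; first (rewrite dvdn0 div0n; reflexivity).
  have -> : (M.+1 %| r.+1) = false by apply/negP => /(dvdn_leq (ltn0Sn r)); lia.
  reflexivity.
- by move: hk; rewrite leqNgt h.
- rewrite h; reflexivity.
Qed.

Lemma swap4 (x y z w : fps) : fmul (fmul x y) (fmul z w) = fmul (fmul x z) (fmul y w).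
Proof.
rewrite -(fmulA x y) (fmulA y z w) (fmulC y z) -(fmulA z y w) (fmulA x z).
by [].
Qed.

Lemma Q_id M : fmul (D1 M) (fmul (Defs.fprod qq_factor M) (Defs.fprod qq_factor M)) = fps1.
Proof.
elim: M => [|M IH].
  rewrite D10 (_ : Defs.fprod qq_factor 0 = fps1) // !fmulr1 //.
rewrite fprodS D1S.
set Q := Defs.fprod qq_factor M; set q := qq_factor M.
rewrite (swap4 Q q Q q) (swap4 (D1 M) (geo2 M.+1) (fmul Q Q) (fmul q q)) IH fmul1r.
by rewrite fmulA /q /qq_factor geo2_q // geo1_q.
Qed.

Definition strip (s : seq nat) := filter (fun x => 0 < x) s.

Lemma all_zero r : all (geq 0) r -> r = nseq (size r) 0.
Proof.
elim: r => [|x r IH] //= /andP [hx hr]; rewrite -IH //; congr (_ :: _); lia.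
Qed.

Lemma strip_pad s : pairwise geq s -> s = strip s ++ nseq (size s - size (strip s)) 0.
Proof.
elim: s => [|x r IH] //= /andP [hx hr].
case: (posnP x) => h.
  have hr0 : all (geq 0) r by rewrite -h.
  have e := all_zero hr0.
  have -> : strip r = [::] by rewrite e /strip filter_nseq.
  by rewrite /= ?subn0 h {1}e.
by rewrite /= subSS -IH.
Qed.

Lemma strip_inj s s' : pairwise geq s -> pairwise geq s' -> size s = size s' ->
  strip s = strip s' -> s = s'.
Proof.
move=> h h' hs e; rewrite (strip_pad h) (strip_pad h') e hs //.
Qed.

Lemma pw_nseq0 m : pairwise geq (nseq m 0).
Proof. elim: m => [|m IH] //=; rewrite IH andbT; apply/allP => x /nseqP [-> _] //. Qed.

Lemma part1 : (exists P, is_infprod qq_factor P) /\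
   forall P, is_infprod qq_factor P ->
   exists G : fps,
     (forall n, fmul G (fmul P P) n = fps1 n) /\
     forall n, exists s : seq (seq nat),
       [/\ uniq s,
           forall pi, (pi \in s) = is_partition pi && (Oodd pi == n)
         & Posz (size s) = G n].
Proof.
split; first exact: (@infprod_ex (-1)%R).
move=> P hP; have hv := infprod_val (s := (-1)%R) hP.
exists (fun k => D1 k k); split.
  move=> n.
  transitivity (fmul (D1 n) (fmul (Defs.fprod qq_factor n) (Defs.fprod qq_factor n)) n);
    last by rewrite Q_id.
  apply: fmul_eqn => k hk; first exact: (esym (D1_stab hk)).
  apply: fmul_eqn => j hj; rewrite (hv j);
    exact: (esym (fprod_stab (-1)%R (leq_trans hj hk))).
move=> n; exists (map strip (E1 n n)); split.
- rewrite map_inj_in_uniq ?E1_uniq // => s s' hs hs'.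
  move: hs hs'; rewrite !E1P => /and3P [/eqP h1 h2 _] /and3P [/eqP h1' h2' _].
  by apply: strip_inj => //; rewrite h1 h1'.
- move=> pi; apply/idP/idP.
    move=> /mapP [s hs ->]; move: hs; rewrite E1P => /and3P [_ h2 /eqP h3].
    rewrite /is_partition (sorted_pairwise geq_trans) (pairwise_filter _ h2) filter_all /=.
    by rewrite Oodd_os -h3 {2}(strip_pad h2) os_zeros.
  case/andP => /andP [hs hpos]; rewrite Oodd_os => /eqP h.
  apply/mapP; exists (pi ++ nseq (n.*2 - size pi) 0).
    rewrite E1P /spec1 size_cat size_nseq; have := size_os true hpos; rewrite h addn0 => hsz.
    apply/and3P; split; first by rewrite subnKC.
      rewrite pairwise_cat -(sorted_pairwise geq_trans) hs pw_nseq0 andbT.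
      by rewrite andbT; apply/allrelP => x y _ /nseqP [-> _].
    by rewrite os_zeros h.
  by rewrite /strip filter_cat (all_filterP hpos) filter_nseq /= cats0.
- rewrite size_map; reflexivity.
Qed.

Local Open Scope ring_scope.

Theorem theorem12 :
  (* first identity: sum_{pi in U} q^{O(pi)} = 1/(q;q)_oo^2 *)
  ((exists P, is_infprod qq_factor P) /\
   forall P, is_infprod qq_factor P ->
   exists G : fps,
     (forall n, fmul G (fmul P P) n = fps1 n) /\
     forall n, exists s : seq (seq nat),
       [/\ uniq s,
           forall pi, (pi \in s) = is_partition pi && (Oodd pi == n)
         & (size s)%:Z = G n])
  /\
  (* second identity: sum_{pi in D} q^{O(pi')} = (-q;q)_oo^2 *)
  ((exists P, is_infprod mqq_factor P) /\
   forall P, is_infprod mqq_factor P ->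
     forall n, exists s : seq (seq nat),
       [/\ uniq s,
           forall pi, (pi \in s) = distinct_parts pi && (Oodd (conj_part pi) == n)
         & (size s)%:Z = fmul P P n]).
Proof.
split; [exact: part1 | exact: part2].
Qed.
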